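(* Let $\mathbf{A}$ be a countable UL-chain and let $\mathscr{K}_1$ be the class of all finite $\mathbf{A}$-structures $\langle\mathbf{A},\mathbf{M}\rangle$ in the language with a single binary relation symbol $<$ such that for all $a,b\in M$: (1.1) $\|a<a\|^{\mathbf{A}}_{\mathbf{M}}<\bar 1$, and (1.2) $\|a<b\to b<a\|^{\mathbf{A}}_{\mathbf{M}}\ge\bar 1$. Then $\mathscr{K}_1^{\cong}$ is a Fraïssé class, i.e. a countable set of finitely generated $\mathbf{A}$-structures having the hereditary property, the joint embedding property and the amalgamation property.
   Context: A UL-algebra is $\mathbf{A}=\langle A,\wedge,\vee,\&,\to,\bar 0,\bar 1,\bot,\top\rangle$ where $\langle A,\wedge,\vee,\bot,\top\rangle$ is a bounded lattice, $\langle A,\&,\bar 1\rangle$ is a commutative monoid, $a\& b\le c$ iff $b\le a\to c$, and $((a\to b)\wedge\bar 1)\vee((b\to a)\wedge \bar 1)=\bar 1$; a UL-chain is one with linear order. An $\mathbf{A}$-structure for $\{<\}$ is a set $M$ with a function $<_{\mathbf{M}}:M^2\to A$, $\|a<b\|^{\mathbf{A}}_{\mathbf{M}}=<_{\mathbf{M}}(a,b)$, compound formulas evaluated by the operations of $\mathbf{A}$. Substructure: subset with restricted relation. Embedding: injective map preserving the values of $<$, identity on $\mathbf{A}$; isomorphism: surjective embedding. $\mathscr{K}^{\cong}$: one representative of each isomorphism type in $\mathscr{K}$. Hereditary property: closed under substructures (up to isomorphism). Joint embedding property: any two members embed into a common member. Amalgamation property: whenever $\mathbf{M}_0$ is a substructure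 of both $\mathbf{M}_1$ and $\mathbf{M}_2$, all in the class, there are a member $\mathbf{M}_3$ and embeddings $f_1:\mathbf{M}_1\to\mathbf{M}_3$, $f_2:\mathbf{M}_2\to\mathbf{M}_3$ agreeing on $M_0$. *)

(* Defs.v *)
From mathcomp Require Import all_boot.
Set Implicit Arguments. Unset Strict Implicit. Unset Printing Implicit Defensive.

Record ULAlgebra := {
  ul_car :> Type;
  ul_meet : ul_car -> ul_car -> ul_car;
  ul_join : ul_car -> ul_car -> ul_car;
  ul_conj : ul_car -> ul_car -> ul_car;
  ul_imp  : ul_car -> ul_car -> ul_car;
  ul_zero : ul_car;
  ul_one  : ul_car;
  ul_bot  : ul_car;
  ul_top  : ul_car;
  ul_meetA : forall a b c, ul_meet a (ul_meet b c) = ul_meet (ul_meet a b) c;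
  ul_meetC : forall a b, ul_meet a b = ul_meet b a;
  ul_joinA : forall a b c, ul_join a (ul_join b c) = ul_join (ul_join a b) c;
  ul_joinC : forall a b, ul_join a b = ul_join b a;
  ul_meet_join : forall a b, ul_meet a (ul_join a b) = a;
  ul_join_meet : forall a b, ul_join a (ul_meet a b) = a;
  ul_bot_le : forall a, ul_meet ul_bot a = ul_bot;
  ul_le_top : forall a, ul_meet a ul_top = a;
  ul_conjA : forall a b c, ul_conj a (ul_conj b c) = ul_conj (ul_conj a b) c;
  ul_conjC : forall a b, ul_conj a b = ul_conj b a;
  ul_conj1 : forall a, ul_conj a ul_one = a;
  (* residuation: a & b <= c  iff  b <= a -> c, where x <= y := x /\ y = x *)
  ul_resid : forall a b c,
    ul_meet (ul_conj a b) c = ul_conj a b <-> ul_meet b (ul_imp a c) = b;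
  ul_prelin : forall a b,
    ul_join (ul_meet (ul_imp a b) ul_one) (ul_meet (ul_imp b a) ul_one) = ul_one
}.

Definition ul_le (A : ULAlgebra) (a b : A) : Prop := ul_meet a b = a.
Definition ul_lt (A : ULAlgebra) (a b : A) : Prop := ul_le a b /\ a <> b.

Definition ul_chain (A : ULAlgebra) : Prop := forall a b : A, ul_le a b \/ ul_le b a.

Definition countable_carrier (A : ULAlgebra) : Prop :=
  exists f : A -> nat, forall a b, f a = f b -> a = b.

Record FinStr (A : ULAlgebra) := {
  fs_car :> finType;
  fs_lt : fs_car -> fs_car -> A
}.

Definition val_lt (A : ULAlgebra) (M : FinStr A) (a b : M) : A := fs_lt a b.

Definition embedding (A : ULAlgebra) (M N : FinStr A) (f : M -> N) : Prop :=
  injective f /\ forall a b : M, fs_lt (f a) (f b) = fs_lt a b.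
Definition isomorphism (A : ULAlgebra) (M N : FinStr A) (f : M -> N) : Prop :=
  embedding f /\ forall y : N, exists x : M, f x = y.
Definition isomorphic (A : ULAlgebra) (M N : FinStr A) : Prop :=
  exists f : M -> N, isomorphism f.

Definition substructure (A : ULAlgebra) (M : FinStr A) (S : {set M}) : FinStr A :=
  {| fs_car := {x : M | x \in S};
     fs_lt := fun x y => fs_lt (sval x) (sval y) |}.

Definition K1 (A : ULAlgebra) (M : FinStr A) : Prop :=
  (forall a : M, ul_lt (val_lt a a) (ul_one A)) /\
  (forall a b : M, ul_le (ul_one A) (ul_imp (val_lt a b) (val_lt b a))).

Definition countably_many_iso_types (A : ULAlgebra) (K : FinStr A -> Prop) : Prop :=
  exists e : nat -> FinStr A,
    (forall n, K (e n)) /\ (forall M, K M -> exists n, isomorphic M (e n)).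

Definition hereditary (A : ULAlgebra) (K : FinStr A -> Prop) : Prop :=
  forall (M : FinStr A) (S : {set M}), K M -> K (substructure S).

Definition joint_embedding (A : ULAlgebra) (K : FinStr A -> Prop) : Prop :=
  forall M1 M2 : FinStr A, K M1 -> K M2 ->
    exists (M3 : FinStr A) (f1 : M1 -> M3) (f2 : M2 -> M3),
      K M3 /\ embedding f1 /\ embedding f2.

(* M0 is (embedded as) a substructure of M1 and of M2 via g1, g2 *)
Definition amalgamation (A : ULAlgebra) (K : FinStr A -> Prop) : Prop :=
  forall (M0 M1 M2 : FinStr A) (g1 : M0 -> M1) (g2 : M0 -> M2),
    K M0 -> K M1 -> K M2 -> embedding g1 -> embedding g2 ->
    exists (M3 : FinStr A) (f1 : M1 -> M3) (f2 : M2 -> M3),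
      K M3 /\ embedding f1 /\ embedding f2 /\ (forall x, f1 (g1 x) = f2 (g2 x)).

(* finite relational structures are finitely generated, so the Fraisse-class
   condition reduces to the following four properties *)
Definition fraisse_class (A : ULAlgebra) (K : FinStr A -> Prop) : Prop :=
  countably_many_iso_types K /\ hereditary K /\ joint_embedding K /\ amalgamation K.

(* Main.v *)
Require Import Defs.
From mathcomp Require Import all_boot.
From Stdlib Require Import Classical ClassicalEpsilon.

Set Implicit Arguments. Unset Strict Implicit. Unset Printing Implicit Defensive.

Section Aux.
Variable A : ULAlgebra.

Lemma le_refl (a : A) : ul_le a a.
Proof.
rewrite /ul_le.
have h := ul_meet_join a (ul_meet a a).
by rewrite ul_join_meet in h.
Qed.

Lemma one_le_imp (a b : A) : ul_le (ul_one A) (ul_imp a b) <-> ul_le a b.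
Proof.
have h := ul_resid a (ul_one A) b. rewrite ul_conj1 in h.
rewrite /ul_le; split => H; [apply/h | apply/h]; done.
Qed.

Lemma K1_sym (M : FinStr A) : K1 M -> forall a b : M, fs_lt a b = fs_lt b a.
Proof.
move=> [_ H] a b.
have h1 := proj1 (one_le_imp _ _) (H a b).
have h2 := proj1 (one_le_imp _ _) (H b a).
rewrite /ul_le /val_lt in h1 h2.
by rewrite -h1 ul_meetC h2.
Qed.

Lemma K1_of_sym (M : FinStr A) :
  (forall a : M, ul_lt (val_lt a a) (ul_one A)) ->
  (forall a b : M, fs_lt a b = fs_lt b a) -> K1 M.
Proof.
move=> H1 H2; split => // a b; apply/one_le_imp; rewrite /val_lt H2; apply: le_refl.
Qed.

Lemma K1_emb (M N : FinStr A) (f : M -> N) : embedding f -> K1 N -> K1 M.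
Proof.
move=> [_ Hf] HN; apply: K1_of_sym.
- move=> a; rewrite /val_lt -Hf; exact: (proj1 HN).
- by move=> a b; rewrite -!Hf; apply: K1_sym.
Qed.

Lemma K1_iso (M N : FinStr A) (f : M -> N) : isomorphism f -> K1 M -> K1 N.
Proof.
move=> [[_ Hf] Hs] HM; apply: K1_of_sym.
- move=> a; case: (Hs a) => x <-; rewrite /val_lt Hf; exact: (proj1 HM).
- move=> a b; case: (Hs a) => x <-; case: (Hs b) => y <-; rewrite !Hf.
  exact: K1_sym.
Qed.

Definition Dec (g : nat -> A) (s : seq (seq nat)) : FinStr A :=
  {| fs_car := 'I_(size s); fs_lt := fun i j => g (nth 0 (nth [::] s i) j) |}.

Definition enc_e (g : nat -> A) (k : nat) : FinStr A :=
  if excluded_middle_informative (K1 (Dec g (odflt [::] (unpickle k))))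
  then Dec g (odflt [::] (unpickle k)) else Dec g [::].

Lemma K1_empty (g : nat -> A) : K1 (Dec g [::]).
Proof. by split; case. Qed.

Lemma enc_e_K1 g k : K1 (enc_e g k).
Proof. unfold enc_e; destruct excluded_middle_informative; [done | exact: K1_empty]. Qed.

Lemma enc_complete (f : A -> nat) (g : nat -> A) (gK : forall a, g (f a) = a)
  (M : FinStr A) : K1 M -> exists n, isomorphic M (enc_e g n).
Proof.
move=> HM.
pose s := [seq [seq f (fs_lt x y) | y <- enum M] | x <- enum M].
have Hs : size s = #|M| by rewrite size_map -cardE.
pose phi (x : M) : Dec g s := cast_ord (esym Hs) (enum_rank x).
have Hphi : isomorphism phi.
  split; first split.
  - move=> x y H; apply: enum_rank_inj; apply: val_inj; exact: (congr1 val H).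
  - move=> x y /=.
    rewrite (nth_map x) /=; last by rewrite -cardE ltn_ord.
    rewrite nth_enum_rank (nth_map y) /=; last by rewrite -cardE ltn_ord.
    by rewrite nth_enum_rank gK.
  - move=> z; exists (enum_val (cast_ord Hs z)).
    by apply: val_inj; rewrite /phi /= enum_valK.
exists (pickle s); unfold enc_e; rewrite pickleK /=.
destruct excluded_middle_informative as [H|H].
  by exists phi.
by case: H; apply: K1_iso Hphi HM.
Qed.

Section Amalg.
Variables (M0 M1 M2 : FinStr A) (g1 : M0 -> M1) (g2 : M0 -> M2).

Definition amr (p q : (M1 + M2)%type) : A :=
  match p, q with
  | inl a, inl b => fs_lt a b
  | inr a, inr b => fs_lt a b
  | inl a, inr b => match [pick x | g1 x == a] with Some x => fs_lt (g2 x) b | None => ul_one A end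
  | inr b, inl a => match [pick x | g1 x == a] with Some x => fs_lt b (g2 x) | None => ul_one A end
  end.

Definition M3 : FinStr A := {| fs_car := (M1 + M2)%type; fs_lt := amr |}.

Definition af1 (a : M1) : M3 := inl a.
Definition af2 (y : M2) : M3 :=
  match [pick x | g2 x == y] with Some x => inl (g1 x) | None => inr y end.

End Amalg.

Lemma amalg_ok : amalgamation (@K1 A).
Proof.
move=> M0 M1 M2 g1 g2 K0 K1' K2 [i1 e1] [i2 e2].
exists (M3 g1 g2), (@af1 _ _ _ g1 g2), (af2 g1 g2).
have pk1 : forall x, [pick x' | g1 x' == g1 x] = Some x.
  move=> x; case: pickP => [x' /eqP /i1 -> //| H]; by have := H x; rewrite eqxx.
have pk2 : forall x, [pick x' | g2 x' == g2 x] = Some x.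
  move=> x; case: pickP => [x' /eqP /i2 -> //| H]; by have := H x; rewrite eqxx.
split; [|split; [|split]].
- apply: K1_of_sym.
  + case=> a; rewrite /val_lt /=; [exact: (proj1 K1') | exact: (proj1 K2)].
  + case=> a [] b /=; try exact: K1_sym.
    * by case: pickP => // x _; apply: K1_sym.
    * by case: pickP => // x _; apply: K1_sym.
- split; first by move=> a b [].
  by [].
- split.
  + move=> y y'; rewrite /af2.
    case: pickP => [x /eqP Hx|Hx]; case: pickP => [x' /eqP Hx'|Hx'] //.
    * by case => /i1 E; rewrite -Hx -Hx' E.
    * by case.
- move=> y y'; rewrite /af2.
    case: pickP => [x /eqP <-|Hx]; case: pickP => [x' /eqP <-|Hx'] /=.
    * by rewrite e1 e2.
    * by rewrite pk1.
    * by rewrite pk1.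
    * by [].
- by move=> x; rewrite /af1 /af2 pk2.
Qed.

End Aux.

Theorem proposition2 (A : ULAlgebra) :
  ul_chain A -> countable_carrier A -> fraisse_class (@K1 A).
Proof.
move=> _ [f finj].
have [g gK] : exists g : nat -> A, forall a, g (f a) = a.
  exists (fun n => match excluded_middle_informative (exists a, f a = n) with
                   | left H => proj1_sig (constructive_indefinite_description _ H)
                   | right _ => ul_one A end).
  move=> a; case: excluded_middle_informative => [H|H].
    case: constructive_indefinite_description => b /= Hb; exact: finj.
  by case: H; exists a.
have AP := @amalg_ok A.
split; [|split; [|split]].
- exists (enc_e g); split; [exact: enc_e_K1 | exact: enc_complete gK].
- move=> M S HM; apply: (@K1_emb A (substructure S) M (fun x => sval x)) HM.
  by split => // x y /val_inj.
- move=> M1 M2 H1 H2.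
  have o1 : Dec g [::] -> M1 by case => m; rewrite ltn0.
  have o2 : Dec g [::] -> M2 by case => m; rewrite ltn0.
  have emb0 : forall (N : FinStr A) (o : Dec g [::] -> N), embedding o.
    by move=> N o; split => -[m Hm]; exfalso; move: Hm; rewrite ltn0.
  have [M3 [f1 [f2 [H3 [E1 [E2 _]]]]]] := AP _ _ _ o1 o2 (K1_empty g) H1 H2 (emb0 _ o1) (emb0 _ o2).
  by exists M3, f1, f2.
- exact: AP.
Qed.
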